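(* Every weakly-reversible chemical reaction network that has a critical siphon is catalytic.
   Context: A chemical reaction network (CRN) consists of positive integers $s$ (species) and $n$ (complexes), a finite directed graph $G$ with vertex set $\{1,\dots,n\}$ and edge set $E(G)$, and an injective labeling of vertex $i$ by a monic monomial $\psi_i=\prod_{j=1}^s x_j^{y_{ij}}$, $y_i=(y_{i1},\dots,y_{is})\in\mathbb{Z}_{\ge0}^s$. $G$ is weakly-reversible iff each connected component is strongly connected. The stoichiometric subspace $S_G\subseteq\mathbb{R}^s$ is the span of $\{y_i-y_j : (i,j)\in E(G)\}$; for $x\in\mathbb{R}^s_{\ge0}$ the invariant polyhedron containing $x$ is $(x+S_G)\cap\mathbb{R}^s_{\ge0}$. A nonempty $Z\subseteq\{1,\dots,s\}$ is a siphon iff for every $(i,j)\in E(G)$, if $x_k\mid\psi_j$ for some $k\in Z$ then $x_l\mid\psi_i$ for some $l\in Z$. A siphon $Z$ is critical iff there is $z\in\mathbb{R}^s_{\ge0}$ with $Z=\{i : z_i=0\}$ such that the invariant polyhedron containing $z$ meets $\mathbb{R}^s_{>0}$. The event-graph $\overline{G}$ has as vertices all monic monomials in $x_1,\dots,x_s$, with an edge $(N\psi_i,N\psi_j)$ for each $(i,j)\in E(G)$ and each monic monomial $N$. A weakly-reversible CRN is catalytic iff there exist monic monomials $M,N$ path-connected in $\overline{G}$ such that $M/\gcd(M,N)$ and $N/\gcd(M,N)$ are not path-connected in $\overline{G}$. *)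

(* Defs.v *)
From Stdlib Require Import Reals Relation_Operators.
From HB Require Import structures.
From mathcomp Require Import all_boot all_order all_algebra.
From mathcomp Require Import Rstruct.

Set Implicit Arguments.
Unset Strict Implicit.
Unset Printing Implicit Defensive.

Import Order.TTheory GRing.Theory Num.Theory.

(* A monic monomial prod_k x_k^(e k) in the variables x_0, ..., x_{s-1}
   is represented by its exponent vector e : 'I_s -> nat. *)
Definition monomial (s : nat) := {ffun 'I_s -> nat}.

(* A CRN: species 'I_s, complexes (vertices) 'I_n, edge relation E on 'I_n,
   labelling y : 'I_n -> monomial s (y i = exponent vector y_i of psi_i). *)

Definition symrel (n : nat) (E : rel 'I_n) : rel 'I_n :=
  fun i j => E i j || E j i.

Definition weakly_reversible (n : nat) (E : rel 'I_n) : Prop :=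
  forall i j : 'I_n, connect (symrel E) i j -> connect E i j.

Definition divides_var (s : nat) (k : 'I_s) (M : monomial s) : bool :=
  (0 < M k)%N.

Definition siphon (s n : nat) (E : rel 'I_n) (y : 'I_n -> monomial s)
    (Z : {set 'I_s}) : Prop :=
  Z != set0 /\
  forall i j : 'I_n, E i j ->
    (exists2 k, k \in Z & divides_var k (y j)) ->
    (exists2 l, l \in Z & divides_var l (y i)).

Definition in_stoich_subspace (s n : nat) (E : rel 'I_n)
    (y : 'I_n -> monomial s) (v : 'I_s -> R) : Prop :=
  exists c : 'I_n -> 'I_n -> R,
    forall k : 'I_s,
      v k = (\sum_(i : 'I_n) \sum_(j : 'I_n | E i j)
               c i j * ((y i k)%:R - (y j k)%:R))%R.

Definition polyhedron_meets_positive (s n : nat) (E : rel 'I_n)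
    (y : 'I_n -> monomial s) (x : 'I_s -> R) : Prop :=
  exists p : 'I_s -> R,
    in_stoich_subspace E y (fun k => (p k - x k)%R) /\
    (forall k, (0 <= p k)%R) /\
    (forall k, (0 < p k)%R).

Definition critical_siphon (s n : nat) (E : rel 'I_n)
    (y : 'I_n -> monomial s) (Z : {set 'I_s}) : Prop :=
  siphon E y Z /\
  exists z : 'I_s -> R,
    (forall k, (0 <= z k)%R) /\
    (forall k, z k = 0%R <-> k \in Z) /\
    polyhedron_meets_positive E y z.

Definition event_edge (s n : nat) (E : rel 'I_n) (y : 'I_n -> monomial s)
    (M M' : monomial s) : Prop :=
  exists (i j : 'I_n) (N : monomial s),
    E i j /\ M = [ffun k => N k + y i k] /\ M' = [ffun k => N k + y j k].

(* M and N are path-connected in the event-graph (a path, ignoring edge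
   orientation; under weak reversibility this coincides with directed
   reachability). *)
Definition event_connected (s n : nat) (E : rel 'I_n)
    (y : 'I_n -> monomial s) : monomial s -> monomial s -> Prop :=
  clos_refl_sym_trans (monomial s) (event_edge E y).

Definition mdiv_gcd (s : nat) (M N : monomial s) : monomial s :=
  [ffun k => M k - minn (M k) (N k)].

Definition catalytic (s n : nat) (E : rel 'I_n) (y : 'I_n -> monomial s)
    : Prop :=
  exists M N : monomial s,
    event_connected E y M N /\
    ~ event_connected E y (mdiv_gcd M N) (mdiv_gcd N M).

(* Main.v *)
Require Import Defs.
From Stdlib Require Import Reals Relation_Operators.
From HB Require Import structures.
From mathcomp Require Import all_boot all_order all_algebra.
From mathcomp Require Import Rstruct zify.

Set Implicit Arguments.
Unset Strict Implicit.
Unset Printing Implicit Defensive.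

Import Order.TTheory GRing.Theory Num.Theory.
Local Open Scope ring_scope.

Definition madd (s : nat) (A B : monomial s) : monomial s :=
  [ffun k => (A k + B k)%N].

Lemma ec_mult (s n : nat) (E : rel 'I_n) (y : 'I_n -> monomial s) A B C :
  event_connected E y A B -> event_connected E y (madd A C) (madd B C).
Proof.
elim=> [M M' [i [j [N [Eij [-> ->]]]]]| M | M M' _ IH | M1 M2 M3 _ IH1 _ IH2].
- apply: rst_step; exists i, j, (madd N C); split => //.
  by split; apply/ffunP => k; rewrite !ffunE addnAC.
- exact: rst_refl.
- exact: rst_sym.
- exact: rst_trans IH1 IH2.
Qed.

Lemma madd_comm (s : nat) (A B : monomial s) : madd A B = madd B A.
Proof. by apply/ffunP => k; rewrite !ffunE addnC. Qed.

Definition reach (s n : nat) (E : rel 'I_n) (y : 'I_n -> monomial s)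
  (w : {ffun 'I_s -> int}) :=
  exists A B : monomial s, event_connected E y A B /\
    forall k, (A k)%:Z - (B k)%:Z = w k.

Lemma reach0 (s n : nat) (E : rel 'I_n) (y : 'I_n -> monomial s) :
  reach E y 0.
Proof.
exists [ffun=> 0%N], [ffun => 0%N]; split; first exact: rst_refl.
by move=> k; rewrite !ffunE subrr.
Qed.

Lemma reachD (s n : nat) (E : rel 'I_n) (y : 'I_n -> monomial s) w1 w2 :
  reach E y w1 -> reach E y w2 -> reach E y (w1 + w2).
Proof.
move=> [A1 [B1 [c1 e1]]] [A2 [B2 [c2 e2]]].
exists (madd A1 A2), (madd B1 B2); split.
  apply: rst_trans (ec_mult A2 c1) _.
  rewrite (madd_comm B1 A2) (madd_comm B1 B2); exact: ec_mult.
move=> k; rewrite !ffunE -e1 -e2 !PoszD; lia.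
Qed.

Lemma reachN (s n : nat) (E : rel 'I_n) (y : 'I_n -> monomial s) w :
  reach E y w -> reach E y (- w).
Proof.
move=> [A [B [c e]]]; exists B, A; split; first exact: rst_sym.
move=> k; rewrite !ffunE -e; lia.
Qed.

Lemma reachMz (s n : nat) (E : rel 'I_n) (y : 'I_n -> monomial s) w z :
  reach E y w -> reach E y (w *~ z).
Proof.
move=> h.
have hn : forall m, reach E y (w *+ m).
  elim=> [|m IH]; first by rewrite mulr0n; exact: reach0.
  by rewrite mulrS; apply: reachD.
by case: z => m /=; [exact: hn | apply: reachN; exact: hn].
Qed.

Definition Yz (s n : nat) (y : 'I_n -> monomial s) (i : 'I_n)
  : {ffun 'I_s -> int} := [ffun k => (y i k)%:Z].

Lemma reach_edge (s n : nat) (E : rel 'I_n) (y : 'I_n -> monomial s) i j :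
  E i j -> reach E y (Yz y i - Yz y j).
Proof.
move=> Eij; exists (y i), (y j); split.
  apply: rst_step; exists i, j, [ffun=> 0%N]; split => //.
  by split; apply/ffunP => k; rewrite !ffunE.
by move=> k; rewrite !ffunE.
Qed.

Definition zfree (s : nat) (Z : {set 'I_s}) (M : monomial s) :=
  forall k, k \in Z -> M k = 0%N.

Lemma zfree_step (s n : nat) (E : rel 'I_n) (y : 'I_n -> monomial s) Z a b :
  siphon E y Z -> E a b -> zfree Z (y a) -> zfree Z (y b).
Proof.
move=> [_ sip] Eab Ha k kZ; apply/eqP; rewrite -leqn0 leqNgt; apply/negP=> pos.
have [l lZ] := sip a b Eab (ex_intro2 _ _ k kZ pos).
by rewrite /divides_var Ha.
Qed.

Lemma zfree_path (s n : nat) (E : rel 'I_n) (y : 'I_n -> monomial s) Z a b :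
  siphon E y Z -> connect E a b -> zfree Z (y a) -> zfree Z (y b).
Proof.
move=> sip /connectP [p pth ->]; elim: p a pth => [|c p IH] a //= /andP [Eac pth] h.
exact: (IH c pth (zfree_step sip Eac h)).
Qed.

Lemma zfree_madd (s : nat) Z (A B : monomial s) :
  zfree Z (madd A B) <-> zfree Z A /\ zfree Z B.
Proof.
split.
  move=> h; split=> k kZ; have := h k kZ; rewrite ffunE; lia.
by move=> [h1 h2] k kZ; rewrite ffunE h1 ?h2.
Qed.

Lemma zfree_closed (s n : nat) (E : rel 'I_n) (y : 'I_n -> monomial s) Z M N :
  siphon E y Z -> weakly_reversible E -> event_connected E y M N ->
  (zfree Z M <-> zfree Z N).
Proof.
move=> sip wr; elim=> [M1 M2 [i [j [N0 [Eij [-> ->]]]]]| M1 | M1 M2 _ IH | M1 M2 M3 _ IH1 _ IH2].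
- have -> : [ffun k => (N0 k + y i k)%N] = madd N0 (y i) by [].
  have -> : [ffun k => (N0 k + y j k)%N] = madd N0 (y j) by [].
  rewrite !zfree_madd.
  have h1 := zfree_step sip Eij.
  have h2 : zfree Z (y j) -> zfree Z (y i).
    apply: zfree_path sip _; apply: wr; apply: connect1.
    by rewrite /symrel Eij orbT.
  tauto.
- tauto.
- tauto.
- tauto.
Qed.

Theorem theorem4p1 (s n : nat) (E : rel 'I_n) (y : 'I_n -> monomial s) :
  (0 < s)%N -> (0 < n)%N ->
  injective y ->
  weakly_reversible E ->
  (exists Z : {set 'I_s}, critical_siphon E y Z) ->
  catalytic E y.
Proof.
move=> _ _ _ wr [Z [sip [z [z0 [zZ [p [[c hc] [_ ppos]]]]]]]].
pose v k := p k - z k.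
have vpos : forall k, k \in Z -> 0 < v k.
  by move=> k kZ; rewrite /v (proj2 (zZ k) kZ) subr0.
pose a i j k : R := (y i k)%:R - (y j k)%:R.
pose B k := \sum_(i : 'I_n) \sum_(j : 'I_n | E i j) `|a i j k|.
pose K := 1 + \sum_(k in Z) B k / v k.
pose d i j : int := Num.floor (K * c i j).
pose u := \sum_(i : 'I_n) \sum_(j : 'I_n | E i j) (Yz y i - Yz y j) *~ d i j.
have ru : reach E y u.
  apply: (big_ind (reach E y)); [exact: reach0| exact: reachD| move=> i _].
  apply: (big_ind (reach E y)); [exact: reach0| exact: reachD| move=> j Eij].
  exact/reachMz/reach_edge.
have uk : forall k, ((u k)%:~R : R) =
    \sum_(i : 'I_n) \sum_(j : 'I_n | E i j) (d i j)%:~R * a i j k.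
  move=> k; rewrite sum_ffunE rmorph_sum; apply: eq_bigr => i _.
  rewrite sum_ffunE rmorph_sum; apply: eq_bigr => j _.
  by rewrite ffunMzE !ffunE mulrzz rmorphM /= rmorphB /= mulrC.
have upos : forall k, k \in Z -> (0 < u k)%R.
  move=> k kZ; rewrite -(ltr0z R) uk.
  have Kv : K * v k = \sum_(i : 'I_n) \sum_(j : 'I_n | E i j) (K * c i j) * a i j k.
    rewrite /v hc mulr_sumr; apply: eq_bigr => i _.
    rewrite mulr_sumr; apply: eq_bigr => j _; by rewrite mulrA.
  have h1 : K * v k - B k <= \sum_(i : 'I_n) \sum_(j : 'I_n | E i j) (d i j)%:~R * a i j k.
    rewrite Kv /B -sumrB ler_sum // => i _; rewrite -sumrB ler_sum // => j _.
    rewrite lerBlDr -lerBlDl -mulrBl.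
    apply: le_trans (ler_norm _) _; rewrite normrM ler_piMl //.
    have := floor_le (K * c i j); have := floorD1_gt (K * c i j).
    rewrite /d rmorphD /=; set f := ((Num.floor _)%:~R : R) => hlt hle.
    rewrite ger0_norm ?subr_ge0 //; rewrite lerBlDl; exact: ltW.
  apply: lt_le_trans h1.
  have hv := vpos k kZ.
  have hB : 0 <= B k by rewrite /B sumr_ge0 // => i _; rewrite sumr_ge0 // => *; exact: normr_ge0.
  have hs : B k / v k <= \sum_(k in Z) B k / v k.
    rewrite (bigD1 k) //= lerDl sumr_ge0 // => l /andP [lZ _].
    apply: divr_ge0; [rewrite sumr_ge0 // => i _; rewrite sumr_ge0 // => *; exact: normr_ge0 | exact/ltW/vpos].
  have hK : 1 + B k / v k <= K by rewrite /K lerD2l.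
  have : (1 + B k / v k) * v k <= K * v k by rewrite ler_pM2r.
  rewrite mulrDl mul1r divfK ?gt_eqF //.
  move=> hh; rewrite subr_gt0; apply: lt_le_trans hh; by rewrite ltrDr.
have [A [B0 [cAB eAB]]] := ru.
exists A, B0; split => // hc2.
have AB : forall k, k \in Z -> (B0 k < A k)%N.
  move=> k kZ; have := upos k kZ; rewrite -eAB; lia.
have zf : zfree Z (mdiv_gcd B0 A).
  move=> k kZ; rewrite ffunE; have := AB k kZ; lia.
have := proj2 (zfree_closed sip wr hc2) zf.
have [Zn0 _] := sip; have [k0 k0Z] := set0Pn Z Zn0.
move=> /(_ k0 k0Z); rewrite ffunE; have := AB k0 k0Z; lia.
Qed.
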